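(* For any positive integers $n,p$, there exists an $n$-node directed weighted graph $G$ and a set $P$ of $|P|\le p$ demand pairs that is independent in $G$, such that the minimal distance preserver of $G,P$ has exactly $\mathtt{DP}(n,p)$ edges.
   Context: For a directed graph $G=(V,E,w)$ with nonnegative real edge weights and a set $P\subseteq V\times V$ of demand pairs, a distance preserver is a subgraph $H\subseteq G$ with $\mathrm{dist}_H(s,t)=\mathrm{dist}_G(s,t)$ for all $(s,t)\in P$. $\mathtt{DP}(n,p)$ is the least integer such that every $n$-node such graph and every set of $|P|=p$ demand pairs has a distance preserver on at most $\mathtt{DP}(n,p)$ edges. $P$ is independent in $G$ if every $(s,t)\in P$ has a unique shortest $s\leadsto t$ path in $G$ and these shortest paths are pairwise edge-disjoint. *)

(* Defs.v *)
From HB Require Import structures.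
From mathcomp Require Import all_boot all_order all_algebra.
From mathcomp Require Import boolp classical_sets reals constructive_ereal ereal.
Set Implicit Arguments. Unset Strict Implicit. Unset Printing Implicit Defensive.
Import Order.TTheory GRing.Theory Num.Theory.
Local Open Scope ring_scope.
Local Open Scope classical_set_scope.

(* A directed graph on the n nodes 'I_n is given by an edge set
   E : {set 'I_n * 'I_n} together with a weight function w (only its values
   on E matter); the graph has nonnegative weights when w is nonnegative on E.
   A subgraph H of G = (E, w) is given by a subset F of E with the same w. *)

Section Graphs.
Variables (R : realType) (n : nat).
Notation V := 'I_n.

Definition nonneg_weights (E : {set V * V}) (w : V -> V -> R) : Prop :=
  forall e, e \in E -> 0 <= w e.1 e.2.

(* The trivial path [:: s] is the path from s to s. *)
Definition is_spath (E : {set V * V}) (s t : V) (vs : seq V) : bool :=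
  [&& path (fun u v => (u, v) \in E) s vs, uniq (s :: vs) & last s vs == t].

Definition pedges (s : V) (vs : seq V) : seq (V * V) := zip (s :: vs) vs.

Definition pweight (w : V -> V -> R) (s : V) (vs : seq V) : R :=
  \sum_(e <- pedges s vs) w e.1 e.2.

Definition dist (E : {set V * V}) (w : V -> V -> R) (s t : V) : \bar R :=
  ereal_inf [set (pweight w s vs)%:E | vs in [set vs | is_spath E s t vs]].

Definition is_preserver (E : {set V * V}) (w : V -> V -> R)
    (P : {set V * V}) (F : {set V * V}) : Prop :=
  F \subset E /\ forall q, q \in P -> dist F w q.1 q.2 = dist E w q.1 q.2.

Definition DP_bound (p k : nat) : Prop :=
  forall (E : {set V * V}) (w : V -> V -> R) (P : {set V * V}),
    nonneg_weights E w -> #|P| = p ->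
    exists F, is_preserver E w P F /\ (#|F| <= k)%N.

Lemma DP_bound_ex (p : nat) : exists k, `[< DP_bound p k >].
Proof.
exists #|{: V * V}|; apply/asboolP => E w P _ _; exists E; split; last exact: max_card.
by split => //; apply: subxx.
Qed.

Definition DP (p : nat) : nat := ex_minn (DP_bound_ex p).

Definition is_shortest (E : {set V * V}) (w : V -> V -> R) (s t : V)
    (vs : seq V) : Prop :=
  is_spath E s t vs /\ (pweight w s vs)%:E = dist E w s t.

Definition independent (E : {set V * V}) (w : V -> V -> R)
    (P : {set V * V}) : Prop :=
  (forall q, q \in P -> exists vs, is_shortest E w q.1 q.2 vs /\
       forall vs', is_shortest E w q.1 q.2 vs' -> vs' = vs) /\
  (forall q q', q \in P -> q' \in P -> q != q' ->
     forall vs vs', is_shortest E w q.1 q.2 vs -> is_shortest E w q'.1 q'.2 vs' ->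
     forall e, e \in pedges q.1 vs -> e \notin pedges q'.1 vs').

End Graphs.

(* Main.v *)
Require Import Defs.
From HB Require Import structures.
From mathcomp Require Import all_boot all_order all_algebra zify lra.
From mathcomp Require Import boolp classical_sets reals constructive_ereal ereal.
Set Implicit Arguments. Unset Strict Implicit. Unset Printing Implicit Defensive.
Import Order.TTheory GRing.Theory Num.Theory.

Local Open Scope ring_scope.

Section PathLemmas.
Variable (n : nat).
Local Notation V := 'I_n.

Lemma pedges_cons (x v : V) vs : pedges x (v :: vs) = (x, v) :: pedges v vs.
Proof. by []. Qed.

Lemma pedges_nil (x : V) : pedges x [::] = [::].
Proof. by []. Qed.

Lemma pedges_cat (x : V) a b : pedges x (a ++ b) = pedges x a ++ pedges (last x a) b.
Proof. by elim: a x => [|u a IH] x //=; rewrite pedges_cons IH. Qed.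

Lemma path_pedges (r : rel V) (x : V) vs :
  path r x vs = all (fun e => r e.1 e.2) (pedges x vs).
Proof. by elim: vs x => [|u vs IH] x //=; rewrite IH. Qed.

Lemma mem_pedges (x : V) vs e : e \in pedges x vs -> e.1 \in x :: vs /\ e.2 \in vs.
Proof.
elim: vs x => [|u vs IH] x //=.
rewrite pedges_cons in_cons => /orP [/eqP -> | /IH [h1 h2]] /=.
  by split; rewrite /= !in_cons eqxx ?orbT.
split; first by rewrite in_cons h1 orbT.
by rewrite in_cons h2 orbT.
Qed.

Lemma uniq_pedges (x : V) vs : uniq (x :: vs) -> uniq (pedges x vs).
Proof. by move=> u; apply: zip_uniql. Qed.

Lemma pedges_succ (x : V) vs a b c :
  uniq (x :: vs) -> (a, b) \in pedges x vs -> (a, c) \in pedges x vs -> b = c.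
Proof.
elim: vs x => [|u vs IH] x //= /andP [xn un].
rewrite pedges_cons !in_cons.
case/orP => [/eqP [e1 e2] | h1]; case/orP => [/eqP [e3 e4] | h2].
- by subst.
- by subst; have [h _] := mem_pedges h2; rewrite /= h in xn.
- by subst; have [h _] := mem_pedges h1; rewrite /= h in xn.
- exact: IH h1 h2.
Qed.

Lemma sub_pedges_eq (x : V) vs1 vs2 :
  uniq (x :: vs1) -> uniq (x :: vs2) -> last x vs1 = last x vs2 ->
  {subset pedges x vs1 <= pedges x vs2} -> vs1 = vs2.
Proof.
elim: vs1 x vs2 => [|u r1 IH] x [|v r2] //=.
- move=> _ /andP [xn _] el _; exfalso.
  by move: xn; rewrite el mem_last.
- move=> _ _ _ /(_ (x, u)); rewrite pedges_cons mem_head => /(_ isT).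
  by [].
- move=> /andP [xn1 u1] /andP [xn2 u2] el sub.
  have := sub (x, u); rewrite !pedges_cons mem_head in_cons => /(_ isT) /orP [/eqP [eu] | h].
    subst v; congr (_ :: _); apply: (IH u) => // e he.
    have := sub e; rewrite !pedges_cons in_cons he orbT => /(_ isT) /orP [/eqP ee | //].
    by have [h1 _] := mem_pedges he; rewrite ee /= in h1; rewrite h1 in xn1.
  by have [h1 _] := mem_pedges h; rewrite /= h1 in xn2.
Qed.

Lemma uniq_last_cat (x : V) a b : uniq (x :: a ++ b) -> uniq (last x a :: b).
Proof.
rewrite -cat_cons cat_uniq => /and3P [_ hn ub] /=; rewrite ub andbT.
apply: contra hn => hb; apply/hasP; exists (last x a) => //; exact: mem_last.
Qed.

End PathLemmas.

Local Open Scope ring_scope.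


Section Weights.
Variables (R : realType) (n : nat).
Local Notation V := 'I_n.
Implicit Types (E : {set V * V}) (w : V -> V -> R).

Definition epath E (x : V) vs := path (fun u v => (u, v) \in E) x vs.

Lemma pweight_nil w (x : V) : pweight w x [::] = 0.
Proof. by rewrite /pweight big_nil. Qed.

Lemma pweight_cons w (x v : V) vs : pweight w x (v :: vs) = w x v + pweight w v vs.
Proof. by rewrite /pweight pedges_cons big_cons. Qed.

Lemma pweight_cat w (x : V) a b :
  pweight w x (a ++ b) = pweight w x a + pweight w (last x a) b.
Proof. by rewrite /pweight pedges_cat big_cat. Qed.

Lemma epath_cat E (x : V) a b : epath E x (a ++ b) = epath E x a && epath E (last x a) b.
Proof. by rewrite /epath cat_path. Qed.

Lemma epath_edges E (x : V) vs e : epath E x vs -> e \in pedges x vs -> e \in E.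
Proof. by rewrite /epath path_pedges => /allP h /h; case: e. Qed.

Lemma pweight_ge0 E w (x : V) vs :
  (forall e, e \in E -> 0 <= w e.1 e.2) -> epath E x vs -> 0 <= pweight w x vs.
Proof.
move=> h p; rewrite /pweight big_seq; apply: sumr_ge0 => e he.
by apply: h; exact: epath_edges p he.
Qed.

Lemma pweight_gt0 E w (x : V) vs :
  (forall e, e \in E -> 0 < w e.1 e.2) -> epath E x vs -> vs != [::] -> 0 < pweight w x vs.
Proof.
move=> h; case: vs => [|v vs] //= /andP [hv p] _.
rewrite pweight_cons; apply: ltr_wpDr; last exact: (h (x, v)).
by apply: pweight_ge0 p => e /h /ltW.
Qed.

Lemma shorten_walk E w (pos : forall e, e \in E -> 0 < w e.1 e.2) vs (x : V) :
  epath E x vs -> exists vs',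
    [/\ epath E x vs', uniq (x :: vs'), last x vs' = last x vs, {subset vs' <= vs} &
        pweight w x vs' <= pweight w x vs /\
        (~~ uniq (x :: vs) -> pweight w x vs' < pweight w x vs)].
Proof.
have [k] := ubnP (size vs); elim: k vs x => // k IH vs x szk p.
have [u|nu] := boolP (uniq (x :: vs)).
  by exists vs; split => //; split => //; rewrite u.
have [xin|xnin] := boolP (x \in vs).
  case/splitPr: xin szk p nu => pre post szk p nu.
  move: (p); rewrite epath_cat /= => /andP [p1 /andP [hl p2]].
  have szp : (size post < k)%N.
    by move: szk; rewrite size_cat /= ltnS => h; apply: leq_trans h; exact: leq_addl.
  have [vs' [q1 q2 q3 q4 [q5 _]]] := IH post x szp p2.
  have hpos : 0 < pweight w x pre + w (last x pre) x.
    apply: ltr_wpDl; first exact: pweight_ge0 (fun e h => ltW (pos e h)) p1.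
    exact: (pos (last x pre, x)).
  exists vs'; split => //.
  - by rewrite last_cat /= q3.
  - by move=> y /q4 hy; rewrite mem_cat in_cons hy !orbT.
  split.
  - rewrite pweight_cat pweight_cons addrA; apply: le_trans q5 _.
    by rewrite lerDr ltW.
  - move=> _; rewrite pweight_cat pweight_cons addrA; apply: le_lt_trans q5 _.
    by rewrite ltrDr.
case: vs szk p nu xnin => [|v r] szk p nu xnin; first by rewrite /= in nu.
move: p => /= /andP [hv p].
have nu' : ~~ uniq (v :: r) by move: nu; rewrite /= xnin.
have [r' [q1 q2 q3 q4 [q5 q6]]] := IH r v szk p.
exists (v :: r'); split => //.
- by rewrite /= hv.
- move: q2; rewrite [uniq (v :: _)]/= => q2; rewrite /= q2 andbT. apply: contra xnin; rewrite !in_cons => /orP [-> // | /q4 ->].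
  by rewrite orbT.
- by move=> y; rewrite !in_cons => /orP [-> // | /q4 ->]; rewrite orbT.
split.
- by rewrite !pweight_cons lerD2l.
- by move=> _; rewrite !pweight_cons ltrD2l; apply: q6.
Qed.

End Weights.

Local Open Scope ring_scope.


Section Finite.
Variables (R : realType) (n : nat).
Local Notation V := 'I_n.
Implicit Types (E : {set V * V}) (w : V -> V -> R).

Fixpoint allseqs (k : nat) : seq (seq V) :=
  if k is k'.+1 then [::] :: [seq x :: s | x <- enum V, s <- allseqs k'] else [:: [::]].

Lemma mem_allseqs k (s : seq V) : (size s <= k)%N -> s \in allseqs k.
Proof.
elim: k s => [|k IH] [|x s] //= h.
rewrite in_cons /=; apply/allpairsP; exists (x, s) => /=; split => //.
  by rewrite mem_enum.
by apply: IH.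
Qed.

Lemma uniq_size (x : V) vs : uniq (x :: vs) -> (size vs < n)%N.
Proof.
move=> u; have := uniq_leq_size u (s2 := enum V).
by rewrite size_enum_ord /=; apply => y _; rewrite mem_enum.
Qed.

Lemma spath_allseqs E (s t : V) vs : is_spath E s t vs -> vs \in allseqs n.
Proof. by case/and3P => _ u _; apply: mem_allseqs; apply: ltnW; apply: uniq_size u. Qed.

Lemma argmin (T : eqType) (f : T -> R) (l : seq T) (x : T) :
  x \in l -> exists y, y \in l /\ forall z, z \in l -> f y <= f z.
Proof.
elim: l x => [|a l IH] x //.
case: (boolP (l == [::])) => [/eqP -> _ | ].
  by exists a; split => [|z]; rewrite ?mem_head // in_cons in_nil orbF => /eqP ->.
case: l IH => [//|b l] IH _ _.
have [y [yin ymin]] := IH b (mem_head _ _).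
case: (lerP (f a) (f y)) => h.
  exists a; split; first exact: mem_head.
  by move=> z; rewrite in_cons => /orP [/eqP -> // | /ymin]; apply: le_trans.
exists y; split; first by rewrite in_cons yin orbT.
by move=> z; rewrite in_cons => /orP [/eqP -> | /ymin //]; apply: ltW.
Qed.

Lemma dist_min E w (s t : V) vs0 :
  is_spath E s t vs0 -> (forall vs, is_spath E s t vs -> pweight w s vs0 <= pweight w s vs) ->
  dist E w s t = (pweight w s vs0)%:E.
Proof.
move=> h0 hmin; apply/le_anti/andP; split.
  by apply: ereal_inf_lbound; exists vs0.
by apply: le_ereal_inf_tmp => _ [vs hvs <-]; rewrite lee_fin; apply: hmin.
Qed.

Lemma dist_none E w (s t : V) :
  (forall vs, ~~ is_spath E s t vs) -> dist E w s t = +oo%E.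
Proof.
move=> h; apply/le_anti/andP; split; first exact: leey.
by apply: le_ereal_inf_tmp => y [vs hvs _]; exfalso; move: (h vs) => /negP; apply.
Qed.

Lemma dist_ex E w (s t : V) vs1 : is_spath E s t vs1 ->
  exists vs0, is_spath E s t vs0 /\ forall vs, is_spath E s t vs -> pweight w s vs0 <= pweight w s vs.
Proof.
move=> h1.
have hin : vs1 \in [seq vs <- allseqs n | is_spath E s t vs].
  by rewrite mem_filter h1 (spath_allseqs h1).
have [y [yin ymin]] := argmin (pweight w s) hin.
move: yin; rewrite mem_filter => /andP [hy _].
exists y; split => // vs hvs; apply: ymin.
by rewrite mem_filter hvs (spath_allseqs hvs).
Qed.

End Finite.

Local Open Scope ring_scope.


Definition S2 (l : seq nat) : nat := sumn [seq (2 ^ x)%N | x <- l].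
Definition sh (l : seq nat) : seq nat := [seq x.-1 | x <- l & (0 < x)%N].

Lemma S2_sh l : S2 l = (count_mem 0%N l + 2 * S2 (sh l))%N.
Proof.
elim: l => [|x l IH] //=; rewrite /S2 /sh /= -/(S2 l) IH.
case: x => [|x] /=; rewrite -/(sh l) -/(S2 (sh l)).
  by rewrite expn0; lia.
by rewrite expnS; lia.
Qed.

Lemma mem_sh l y : (y \in sh l) = (y.+1 \in l).
Proof.
apply/mapP/idP => [[x] | h].
  by rewrite mem_filter => /andP [xp xl] ->; rewrite prednK.
by exists y.+1 => //; rewrite mem_filter h.
Qed.

Lemma uniq_sh l : uniq l -> uniq (sh l).
Proof.
move=> u; rewrite map_inj_in_uniq ?filter_uniq // => x y.
rewrite !mem_filter => /andP [xp _] /andP [yp _] e.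
by rewrite -(prednK xp) -(prednK yp) e.
Qed.

Lemma S2_gt0 l : l != [::] -> (0 < S2 l)%N.
Proof. by case: l => // x l _; rewrite /S2 /= addn_gt0 expn_gt0. Qed.

Lemma arith1 (c a K : nat) : (c <= 1 -> c + 2 * a < K.+1 -> 0 < c + 2 * a -> a < K)%N.
Proof. lia. Qed.

Lemma arith2 (c1 c2 a b : nat) : (c1 <= 1 -> c2 <= 1 -> c1 + 2 * a = c2 + 2 * b -> c1 = c2 /\ a = b)%N.
Proof. lia. Qed.

Lemma bin_inj l1 l2 : uniq l1 -> uniq l2 -> S2 l1 = S2 l2 -> l1 =i l2.
Proof.
move=> u1 u2 e; have [k] := ubnP (S2 l1); elim: k l1 l2 u1 u2 e => // k IH l1 l2 u1 u2 e hk.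
case: (boolP (l1 == [::])) => [/eqP z1 | nz1].
  have z2 : l2 = [::].
    apply/eqP; apply: contraT => nz2; have := S2_gt0 nz2.
    by rewrite -e z1.
  by rewrite z1 z2.
have e' := e; rewrite [S2 l1]S2_sh [S2 l2]S2_sh !count_uniq_mem // in e'.
have hk' : (S2 (sh l1) < k)%N.
  have := S2_gt0 nz1; rewrite S2_sh count_uniq_mem //.
  move: hk; rewrite S2_sh count_uniq_mem //.
  by apply: arith1; rewrite leq_b1.
have [e0 e1] : (0%N \in l1) = (0%N \in l2) /\ S2 (sh l1) = S2 (sh l2).
  have [a1 a2] := arith2 (leq_b1 _) (leq_b1 _) e'.
  by split => //; move: a1; case: (0%N \in l1); case: (0%N \in l2).
have IH' := IH _ _ (uniq_sh u1) (uniq_sh u2) e1 hk'.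
by case => [|y] //; rewrite -!mem_sh IH'.
Qed.

Section Perturb.
Variables (R : realType) (n : nat).
Local Notation V := 'I_n.
Implicit Types (E : {set V * V}) (w : V -> V -> R).

Definition idx (e : V * V) : nat := enum_rank e.

Definition tie (x : V) vs : nat := (\sum_(e <- pedges x vs) 2 ^ idx e)%N.

Lemma tie_S2 x vs : tie x vs = S2 [seq idx e | e <- pedges x vs].
Proof. by rewrite /tie /S2 -map_comp sumnE big_map. Qed.

Definition NN := #|{: V * V}|.

Lemma tie_le x vs : (tie x vs <= size vs * 2 ^ NN)%N.
Proof.
rewrite /tie; elim: vs x => [|v vs IH] x; first by rewrite big_nil.
rewrite pedges_cons big_cons /= mulSn; apply: leq_add; last exact: IH.
by rewrite leq_pexp2l // ltnW // /idx ltn_ord.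
Qed.

Definition omega w (d : R) (u v : V) : R := w u v + d * (2 ^ idx (u, v))%:R.

Lemma pweight_omega w d x vs :
  pweight (omega w d) x vs = pweight w x vs + d * (tie x vs)%:R.
Proof.
rewrite /pweight /omega big_split /= /tie natr_sum mulr_sumr; congr (_ + _).
by apply: eq_bigr => -[].
Qed.

Lemma gap_pairs (ps : seq (R * R)) :
  exists g, 0 < g /\ forall p, p \in ps -> p.1 < p.2 -> g <= p.2 - p.1.
Proof.
elim: ps => [|p ps [g [g0 hg]]]; first by exists 1.
case: (ltP p.1 p.2) => h.
  exists (Num.min g (p.2 - p.1)); split; first by rewrite lt_min g0 subr_gt0.
  move=> q; rewrite in_cons => /orP [/eqP -> _ | /hg hq /hq]; first by rewrite ge_min lexx orbT.
  by move=> hq'; rewrite ge_min hq'.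
exists g; split => // q; rewrite in_cons => /orP [/eqP -> | /hg //].
by move=> h'; exfalso; move: h; rewrite leNgt h'.
Qed.

Lemma perturb E w : nonneg_weights E w -> exists om : V -> V -> R,
  [/\ forall e, e \in E -> 0 < om e.1 e.2,
      forall e, e \in E -> om e.1 e.2 = w e.1 e.2 + (om e.1 e.2 - w e.1 e.2),
      (forall s t vs vs', is_spath E s t vs -> is_spath E s t vs' ->
          pweight om s vs <= pweight om s vs' -> pweight w s vs <= pweight w s vs') &
      (forall s t vs vs', is_spath E s t vs -> is_spath E s t vs' ->
          pweight om s vs = pweight om s vs' -> vs = vs')].
Proof.
move=> hw.
pose L := [seq pweight w x vs | x <- enum V, vs <- allseqs n n].
have [g [g0 hg]] := gap_pairs [seq (a, b) | a <- L, b <- L].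
pose T := (n * 2 ^ NN)%N.
pose d := g / (T.+1)%:R.
have d0 : 0 < d by rewrite divr_gt0 // ltr0n.
have hT : forall x vs, is_spath E x (last x vs) vs -> d * (tie x vs)%:R < g.
  move=> x vs /and3P [_ u _].
  have hle : (tie x vs <= T)%N.
    apply: leq_trans (tie_le x vs) _; rewrite leq_mul2r ltnW ?orbT //.
    exact: uniq_size u.
  rewrite /d mulrAC ltr_pdivrMr ?ltr0n // ltr_pM2l // ltr_nat ltnS //.
have inL : forall x vs, is_spath E x (last x vs) vs -> pweight w x vs \in L.
  move=> x vs h; apply/allpairsP; exists (x, vs); split => //=; first by rewrite mem_enum.
  exact: spath_allseqs h.
have key : forall s t vs vs', is_spath E s t vs -> is_spath E s t vs' ->
    pweight (omega w d) s vs <= pweight (omega w d) s vs' -> pweight w s vs <= pweight w s vs'.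
  move=> s t vs vs' h h' hle; rewrite leNgt; apply/negP => hlt.
  have lt1 : (last s vs = t) by case/and3P: h => _ _ /eqP.
  have lt2 : (last s vs' = t) by case/and3P: h' => _ _ /eqP.
  have hL := hg (pweight w s vs', pweight w s vs).
  have := hL; rewrite /= => /(_ _ hlt).
  have pin : (pweight w s vs', pweight w s vs) \in [seq (a, b) | a <- L, b <- L].
    apply/allpairsP; exists (pweight w s vs', pweight w s vs); split => //.
      by apply: inL; rewrite lt2.
    by apply: inL; rewrite lt1.
  move/(_ pin) => hgap.
  move: hle; rewrite !pweight_omega => hle.
  have t1 : d * (tie s vs')%:R < g by apply: hT; rewrite lt2.
  have t2 : 0 <= d * (tie s vs)%:R by rewrite mulr_ge0 // ltW.
  have : pweight w s vs + d * (tie s vs)%:R > pweight w s vs' + d * (tie s vs')%:R.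
    by move: hgap; rewrite lerBrDl => hgap; lra.
  by rewrite ltNge hle.
exists (omega w d); split.
- move=> e he; rewrite /omega; apply: ltr_wpDl; first exact: hw.
  by rewrite mulr_gt0 // ltr0n expn_gt0.
- by move=> e _; rewrite addrC subrK.
- exact: key.
- move=> s t vs vs' h h' e.
  have e1 : pweight w s vs = pweight w s vs'.
    by apply/le_anti; rewrite (key _ _ _ _ h h') ?e // (key _ _ _ _ h' h) ?e.
  move: e; rewrite !pweight_omega e1 => /addrI /(mulfI (lt0r_neq0 d0)) /eqP.
  rewrite eqr_nat => /eqP et.
  case/and3P: h => p1 u1 /eqP l1; case/and3P: h' => p2 u2 /eqP l2.
  apply: (sub_pedges_eq u1 u2); first by rewrite l1 l2.
  move=> e he.
  have ui : forall vs0, uniq (s :: vs0) -> uniq [seq idx e0 | e0 <- pedges s vs0].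
    by move=> vs0 u0; rewrite map_inj_uniq ?uniq_pedges // => a b /ord_inj /enum_rank_inj.
  move: et; rewrite !tie_S2 => et.
  have := bin_inj (ui _ u1) (ui _ u2) et (idx e).
  have idxi : injective idx by move=> a b /ord_inj /enum_rank_inj.
  by rewrite !(mem_map idxi) he.
Qed.

End Perturb.

Local Open Scope ring_scope.


Section SPTheory.
Variables (R : realType) (n : nat).
Local Notation V := 'I_n.
Variables (E : {set V * V}) (om : V -> V -> R).
Hypothesis pos : forall e, e \in E -> 0 < om e.1 e.2.
Hypothesis uni : forall s t vs vs', is_spath E s t vs -> is_spath E s t vs' ->
          pweight om s vs = pweight om s vs' -> vs = vs'.

Definition SP (x y : V) vs := is_spath E x y vs /\
  forall vs', is_spath E x y vs' -> pweight om x vs <= pweight om x vs'.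

Lemma SP_dist x y vs : SP x y vs -> dist E om x y = (pweight om x vs)%:E.
Proof. by case=> h1 h2; apply: dist_min. Qed.

Lemma SP_unique x y a b : SP x y a -> SP x y b -> a = b.
Proof.
move=> [ha ma] [hb mb]; apply: (uni ha hb).
by apply/le_anti; rewrite ma // mb.
Qed.

Lemma SP_ex x y vs : is_spath E x y vs -> exists vs0, SP x y vs0.
Proof. by move=> h; have [vs0 [h1 h2]] := dist_ex om h; exists vs0. Qed.

Lemma spath_epath x y vs : is_spath E x y vs -> epath E x vs.
Proof. by case/and3P. Qed.

Lemma walk_ge x y W vs : epath E x W -> last x W = y -> SP x y vs ->
  pweight om x vs <= pweight om x W.
Proof.
move=> p l [h m].
have [W' [q1 q2 q3 _ [q4 _]]] := shorten_walk pos p.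
apply: le_trans q4; apply: m; apply/and3P; split => //; by rewrite q3 l.
Qed.

Lemma walk_eq x y W vs : epath E x W -> last x W = y -> SP x y vs ->
  pweight om x W <= pweight om x vs -> W = vs.
Proof.
move=> p l [h m] hle.
have [W' [q1 q2 q3 _ [q4 q5]]] := shorten_walk pos p.
have hW' : is_spath E x y W' by apply/and3P; split => //; by rewrite q3 l.
have [u|nu] := boolP (uniq (x :: W)).
  have hW : is_spath E x y W by apply/and3P; split => //; by rewrite l.
  apply: (uni hW h); apply/le_anti; rewrite hle.
  exact: m.
have := q5 nu; have := m _ hW'.
move=> a b; exfalso; move: (le_lt_trans a b) => c.
by move: (lt_le_trans c hle); rewrite ltxx.
Qed.

Lemma SP_sub x y a b c : SP x y (a ++ b ++ c) ->
  SP (last x a) (last (last x a) b) b.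
Proof.
move=> [h m]; case/and3P: (h) => p u /eqP l.
set z := last x a.
have pp : epath E x (a ++ b ++ c) by [].
move: pp; rewrite !epath_cat => /and3P [pa pb pc].
have ub : uniq (z :: b).
  have := uniq_last_cat u; rewrite -/z -cat_cons cat_uniq => /andP [-> //].
split; first by apply/and3P; split.
move=> b' /and3P [pb' ub' /eqP lb'].
have pW : epath E x (a ++ b' ++ c).
  rewrite !epath_cat pa /= -/z; apply/andP; split; first exact: pb'.
  by rewrite lb'.
have lW : last x (a ++ b' ++ c) = y.
  by rewrite !last_cat -/z lb' -l !last_cat.
have := walk_ge pW lW (conj h m).
by rewrite !pweight_cat -/z lb' lerD2l lerD2r.
Qed.

End SPTheory.

Local Open Scope ring_scope.


Section Dec.
Variables (R : realType) (n : nat).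
Local Notation V := 'I_n.
Variable (Fo : {set V * V}).

Lemma split_old r (v : V) : exists old rest,
  [/\ r = old ++ rest, all (fun e => e \in Fo) (pedges v old) &
      (rest = [::] \/ (last v old, head (last v old) rest) \notin Fo)].
Proof.
elim: r v => [|u r IH] v; first by exists [::], [::]; split => //; left.
case: (boolP ((v, u) \in Fo)) => h.
  have [old [rest [e1 e2 e3]]] := IH u.
  by exists (u :: old), rest; split; rewrite /= ?e1 ?h.
by exists [::], (u :: r); split => //; right.
Qed.

Lemma count_old (x : V) old : all (fun e => e \in Fo) (pedges x old) ->
  count (fun e => e \notin Fo) (pedges x old) = 0%N.
Proof.
move=> /allP h; apply/eqP; rewrite -leqn0 leqNgt -has_count; apply/hasP => -[e he].
by rewrite h.
Qed.

Lemma sub_last (v : V) old rest cs : subseq cs rest -> subseq (last v old :: cs) (v :: old ++ rest).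
Proof.
case/lastP: old => [|old' u] h; first by rewrite /= eqxx.
rewrite last_rcons -cats1 -catA /=.
have h1 : subseq (u :: cs) (u :: rest) by rewrite /= eqxx.
have h2 := suffix_subseq (v :: old') (u :: rest).
exact: subseq_trans h1 h2.
Qed.

Lemma dec (g om : V -> V -> R) vs (x : V) :
  (vs = [::] \/ (x, head x vs) \notin Fo) ->
  (forall pre B post, vs = pre ++ B ++ post -> B != [::] ->
      g (last x pre) (last (last x pre) B) = pweight om (last x pre) B) ->
  exists cs, [/\ subseq cs vs, last x cs = last x vs,
    size cs = count (fun e => e \notin Fo) (pedges x vs),
    (forall a b, (a, b) \in pedges x cs -> exists pre B post,
        [/\ vs = pre ++ B ++ post, last x pre = a, last a B = b &
            (a, head a B) \notin Fo /\ B != [::]]) &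
    (forall a, a \in x :: cs -> a != last x cs -> exists z,
        (a, z) \in pedges x vs /\ (a, z) \notin Fo) /\
    pweight g x cs = pweight om x vs].
Proof.
have [k] := ubnP (size vs); elim: k vs x => // k IH vs x szk hfirst hg.
case: vs szk hfirst hg => [|v r] szk hfirst hg.
  exists [::]; split => //; split; last by rewrite !pweight_nil.
  by move=> a; rewrite in_cons in_nil orbF => /eqP -> /=; rewrite eqxx.
have hxv : (x, v) \notin Fo by case: hfirst.
have [old [rest [er hold hrest]]] := split_old r v.
set y := last v old.
have szr : (size rest < k)%N.
  by move: szk; rewrite er /= size_cat !ltnS => h; apply: leq_ltn_trans h; rewrite leq_addl.
have hg' : forall pre B post, rest = pre ++ B ++ post -> B != [::] ->
    g (last y pre) (last (last y pre) B) = pweight om (last y pre) B.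
  move=> pre B post e hB.
  have := hg (v :: old ++ pre) B post; rewrite er e /= -catA => /(_ erefl hB).
  by rewrite last_cat.
have [cs [c1 c2 c3 c4 [c5 c6]]] := IH rest y szr hrest hg'.
have hB : g x y = pweight om x (v :: old).
  by have := hg [::] (v :: old) rest; rewrite er /= => /(_ erefl isT).
exists (y :: cs); split.
- by rewrite er; apply: sub_last.
- by rewrite /= c2 er last_cat.
- by rewrite er pedges_cons pedges_cat /= c3 hxv count_cat (count_old hold).
- move=> a b; rewrite pedges_cons in_cons => /orP [/eqP [-> ->] | hab].
    exists [::], (v :: old), rest; split => //=; first by rewrite er.
  have [pre [B [post [d1 d2 d3 [d4 d5]]]]] := c4 a b hab.
  exists (v :: old ++ pre), B, post; split => //.
    by rewrite er d1 /= -catA.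
  by rewrite /= last_cat.
- split.
    move=> a; rewrite in_cons => /orP [/eqP -> _ | ha hne].
      by exists v; rewrite pedges_cons mem_head.
    have [z [z1 z2]] := c5 a ha hne; exists z; split => //.
    by rewrite er pedges_cons in_cons pedges_cat mem_cat z1 !orbT.
  by rewrite pweight_cons c6 hB er -cat_cons pweight_cat.
Qed.

End Dec.

Local Open Scope ring_scope.


Section Construction.
Variables (R : realType) (n : nat).
Local Notation V := 'I_n.
Variables (E : {set V * V}) (om : V -> V -> R) (P : {set V * V}).
Hypothesis pos : forall e, e \in E -> 0 < om e.1 e.2.
Hypothesis uni : forall s t vs vs', is_spath E s t vs -> is_spath E s t vs' ->
          pweight om s vs = pweight om s vs' -> vs = vs'.
Variable q0 : V * V.
Variable pi : V * V -> seq V.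
Hypothesis hpi : forall q, SP E om q.1 q.2 (pi q) \/
   ((forall vs, ~~ is_spath E q.1 q.2 vs) /\ pi q = [::]).

Definition qs := enum P.
Definition m := size qs.
Definition qk (k : nat) := nth q0 qs k.
Definition edges_of (k : nat) := pedges (qk k).1 (pi (qk k)).
Definition Fk (j : nat) : {set V * V} :=
  [set e | [exists k : 'I_m, (k < j)%N && (e \in edges_of k)]].
Definition w' (u v : V) : R := fine (dist E om u v).

Lemma pi_uniq q : uniq (q.1 :: pi q).
Proof. by case: (hpi q) => [[/and3P [_ u _] _] | [_ ->]]. Qed.

Lemma pi_epath q : epath E q.1 (pi q).
Proof. by case: (hpi q) => [[/and3P [p _ _] _] | [_ ->]]. Qed.

Lemma edges_Fk (k : 'I_m) (j : nat) : (k < j)%N -> {subset edges_of k <= Fk j}.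
Proof. by move=> kj e he; rewrite inE; apply/existsP; exists k; rewrite kj he. Qed.

Lemma Fk_edges j e : e \in Fk j -> exists k : 'I_m, (k < j)%N /\ e \in edges_of k.
Proof. by rewrite inE => /existsP [k /andP [h1 h2]]; exists k. Qed.

Lemma Fk_mono j j' : (j <= j')%N -> {subset Fk j <= Fk j'}.
Proof.
move=> h e /Fk_edges [k [kj he]]; apply: (edges_Fk (k := k)) => //.
exact: leq_trans kj h.
Qed.

Definition Datum (k : 'I_m) (s' : V) (cs : seq V) :=
 [/\ size cs = count (fun e => e \notin Fk k) (edges_of k),
     uniq (s' :: cs),
     (cs != [::] -> exists pre vs', [/\ pi (qk k) = pre ++ vs', last (qk k).1 pre = s',
          SP E om s' (last s' vs') vs', last s' cs = last s' vs' &
          pweight w' s' cs = pweight om s' vs']),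
     (forall a b, (a, b) \in pedges s' cs -> exists B, [/\ SP E om a b B,
          has (fun e => e \notin Fk k) (pedges a B) & {subset pedges a B <= edges_of k}]) &
     (forall a, a \in s' :: cs -> a != last s' cs -> exists z,
          (a, z) \in edges_of k /\ (a, z) \notin Fk k)].

Lemma SP_w' a b B : SP E om a b B -> w' a b = pweight om a B.
Proof. by move=> h; rewrite /w' (SP_dist h). Qed.

Lemma datum_ex (k : 'I_m) : exists p : V * seq V, Datum k p.1 p.2.
Proof.
set s := (qk k).1; set Fo := Fk k.
have triv : count (fun e => e \notin Fo) (edges_of k) = 0%N ->
    exists p : V * seq V, Datum k p.1 p.2.
  move=> h0; exists (s, [::]); split => //=.
  by move=> a; rewrite in_cons in_nil orbF => /eqP ->; rewrite eqxx.
case: (hpi (qk k)) => [hsp | [_ hnil]]; last by apply: triv; rewrite /edges_of hnil.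
have [old [rest [er hold hrest]]] := split_old Fo (pi (qk k)) s.
case: hrest => [rnil | hnew].
  by apply: triv; rewrite /edges_of -/s er rnil cats0 count_old.
set s' := last s old.
have hsp' : SP E om s' (last s' rest) rest.
  have := @SP_sub _ _ _ _ pos s (qk k).2 old rest [::].
  by rewrite cats0 -er => /(_ hsp).
have hg : forall pre B post, rest = pre ++ B ++ post -> B != [::] ->
    w' (last s' pre) (last (last s' pre) B) = pweight om (last s' pre) B.
  move=> pre B post e _. apply: (@SP_w' (last s' pre) (last (last s' pre) B) B). apply: (@SP_sub _ _ _ _ pos s' (last s' rest) pre B post).
  by rewrite -e.
have [cs [c1 c2 c3 c4 [c5 c6]]] := dec (or_intror hnew) hg.
have sub_rest : {subset pedges s' rest <= edges_of k}.
  by move=> e he; rewrite /edges_of -/s er pedges_cat mem_cat he orbT.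
case: hsp' => hsp1 hsp2.
exists (s', cs); split => /=.
- by rewrite c3 /edges_of -/s er pedges_cat count_cat (count_old hold).
- apply: subseq_uniq (_ : subseq (s' :: cs) (s' :: rest)) _; first by rewrite /= eqxx.
  by case/and3P: hsp1.
- move=> _; exists old, rest; split => //.
- move=> a b hab; have [pre [B [post [d1 d2 d3 [d4 d5]]]]] := c4 a b hab.
  have hB : SP E om a b B.
    rewrite -d3 -d2; apply: (@SP_sub _ _ _ _ pos _ _ pre B post); rewrite -d1; exact: conj hsp1 hsp2.
  exists B; split => //.
  + apply/hasP; exists (a, head a B) => //.
    by case: (B) d5 => [//|h B'] _ /=; rewrite pedges_cons mem_head.
  + move=> e he; apply: sub_rest; rewrite d1 !pedges_cat !mem_cat d2 he.
    by rewrite orbT.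
- move=> a ha hne; have [z [z1 z2]] := c5 a ha hne; exists z; split => //.
  exact: sub_rest.
Qed.


Lemma spath_sub (F0 E0 : {set V * V}) s t vs : F0 \subset E0 ->
  is_spath F0 s t vs -> is_spath E0 s t vs.
Proof.
move=> /fintype.subsetP h /and3P [p u l]; apply/and3P; split => //.
by apply: sub_path p => a b /h.
Qed.

Variable D : 'I_m -> V * seq V.
Hypothesis hD : forall k, Datum k (D k).1 (D k).2.

Definition sp' k := (D k).1.
Definition cs k := (D k).2.
Definition ttk k := last (sp' k) (cs k).
Definition E's : {set V * V} := [set e | [exists k : 'I_m, e \in pedges (sp' k) (cs k)]].
Definition E'j (j : nat) : {set V * V} :=
  [set e | [exists k : 'I_m, (k < j)%N && (e \in pedges (sp' k) (cs k))]].
Definition P's : {set V * V} := [set q | [exists k : 'I_m, (cs k != [::]) && (q == (sp' k, ttk k))]].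

Lemma blockk k a b : (a, b) \in pedges (sp' k) (cs k) -> exists B, [/\ SP E om a b B,
   has (fun e => e \notin Fk k) (pedges a B) & {subset pedges a B <= edges_of k}].
Proof. by case: (hD k) => _ _ _ h _; apply: h. Qed.

Lemma disj (k k' : 'I_m) e : (k < k')%N -> e \in pedges (sp' k) (cs k) ->
  e \in pedges (sp' k') (cs k') -> False.
Proof.
case: e => a b kk h1 h2.
have [B [b1 b2 b3]] := blockk h1; have [B' [b1' b2' b3']] := blockk h2.
have eB := SP_unique uni b1 b1'; subst B'.
case/hasP: b2' => e0 he0; apply/negP; rewrite negbK.
by apply: (edges_Fk kk); apply: b3.
Qed.

Lemma disj' (k k' : 'I_m) e : k != k' -> e \in pedges (sp' k) (cs k) ->
  e \in pedges (sp' k') (cs k') -> False.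
Proof.
move=> nk h1 h2; case: (ltngtP k k') => c.
- exact: disj c h1 h2.
- exact: disj c h2 h1.
- by move: nk; rewrite (ord_inj c) eqxx.
Qed.

Lemma expand sg x : epath E's x sg -> exists W, [/\ epath E x W, last x W = last x sg,
  pweight om x W = pweight w' x sg &
  forall a b, (a, b) \in pedges x sg -> exists k B, [/\ (a, b) \in pedges (sp' k) (cs k),
     SP E om a b B, has (fun e => e \notin Fk k) (pedges a B),
     {subset pedges a B <= edges_of k} & {subset pedges a B <= pedges x W}]].
Proof.
elim: sg x => [|b sg IH] x.
  by move=> _; exists [::]; split => //; rewrite !pweight_nil.
move=> hp; have /andP [hxb p] : ((x, b) \in E's) && epath E's b sg := hp.
move: hxb; rewrite inE => /existsP [k hk].
have [B [b1 b2 b3]] := blockk hk.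
have [Wr [r1 r2 r3 r4]] := IH b p.
have lB : last x B = b by case: b1 => /and3P [_ _ /eqP].
have pB : epath E x B by case: b1 => /and3P [].
exists (B ++ Wr); split.
- by rewrite epath_cat pB lB.
- by rewrite last_cat lB r2.
- by rewrite pweight_cat lB r3 pweight_cons (SP_w' b1).
- move=> a c; rewrite pedges_cons in_cons => /orP [/eqP [-> ->] | hac].
    exists k, B; split => // e he; rewrite pedges_cat mem_cat he //.
  have [k' [B' [d1 d2 d3 d4 d5]]] := r4 a c hac.
  exists k', B'; split => // e he; rewrite pedges_cat mem_cat lB d5 ?orbT //.
Qed.

Lemma inv (k : 'I_m) sg x : x \in sp' k :: cs k -> epath E's x sg -> uniq (x :: sg) ->
  last x sg = ttk k ->
  (forall a b, (a, b) \in pedges x sg -> exists k' B, [/\ (a, b) \in pedges (sp' k') (cs k'),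
     SP E om a b B, has (fun e => e \notin Fk k') (pedges a B),
     {subset pedges a B <= edges_of k'} & {subset pedges a B <= edges_of k}]) ->
  {subset pedges x sg <= pedges (sp' k) (cs k)}.
Proof.
elim: sg x => [|b sg IH] x hx; first by [].
move=> hp; have /andP [hxb p] : ((x, b) \in E's) && epath E's b sg := hp.
move=> /andP [xn u] l hb.
have xt : x != ttk k by apply: contra xn => /eqP ->; rewrite -l /= mem_last.
have [z [z1 z2]] : exists z, (x, z) \in edges_of k /\ (x, z) \notin Fk k.
  by case: (hD k) => _ _ _ _ h; apply: h.
have [k' [B [e1 e2 e3 e4 e5]]] := hb x b (mem_head _ _).
have hxz : (x, z) \in pedges x B.
  case: B e2 e3 e4 e5 => [|h B'] e2 e3 e4 e5.
    by exfalso; case: e2 => /and3P [_ _ /eqP xb] _; move: xn; rewrite -xb mem_head.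
  have hh : (x, h) \in edges_of k by apply: e5; rewrite pedges_cons mem_head.
  by rewrite -(pedges_succ (pi_uniq (qk k)) hh z1) pedges_cons mem_head.
have ekk : k' = k.
  case: (ltngtP k' k) => c.
  - by exfalso; move/negP: z2; apply; apply: (edges_Fk c); apply: e4.
  - exfalso; case/hasP: e3 => e0 he0; apply/negP; rewrite negbK.
    by apply: (edges_Fk c); apply: e5.
  - exact: ord_inj.
subst k'.
move=> e; rewrite pedges_cons in_cons => /orP [/eqP -> // | he].
apply: (IH b) => //.
- by have [_ h2] := mem_pedges e1; rewrite in_cons h2 orbT.
- by move=> a c hac; apply: hb; rewrite pedges_cons in_cons hac orbT.
Qed.

Lemma cmin (k : 'I_m) : cs k != [::] -> forall sg, is_spath E's (sp' k) (ttk k) sg ->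
  pweight w' (sp' k) (cs k) <= pweight w' (sp' k) sg /\
  (pweight w' (sp' k) sg <= pweight w' (sp' k) (cs k) -> sg = cs k).
Proof.
move=> hne sg /and3P [p u /eqP l].
have [pre [vs' [f1 f2 f3 f4 f5]]] : exists pre vs', [/\ pi (qk k) = pre ++ vs',
   last (qk k).1 pre = sp' k, SP E om (sp' k) (last (sp' k) vs') vs',
   last (sp' k) (cs k) = last (sp' k) vs' &
   pweight w' (sp' k) (cs k) = pweight om (sp' k) vs'].
  by case: (hD k) => _ _ h _ _; apply: h.
have [W [w1 w2 w3 w4]] := expand p.
have lW : last (sp' k) W = last (sp' k) vs' by rewrite w2 l -f4.
split.
  by rewrite f5 -w3; exact: (walk_ge pos w1 lW f3).
move=> hle.
have eW : W = vs' by apply: (walk_eq pos uni w1 lW f3); rewrite w3 -f5.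
subst W.
have sub : {subset pedges (sp' k) sg <= pedges (sp' k) (cs k)}.
  apply: (inv (mem_head _ _) p u l) => a b hab.
  have [k' [B [d1 d2 d3 d4 d5]]] := w4 a b hab.
  exists k', B; split => // e he.
  by rewrite /edges_of f1 pedges_cat f2 mem_cat (d5 _ he) orbT.
apply: (sub_pedges_eq u); last exact: sub.
- by case: (hD k).
- by rewrite l.
Qed.

Lemma cs_spath k : is_spath E's (sp' k) (ttk k) (cs k).
Proof.
apply/and3P; split => //; last by case: (hD k).
rewrite path_pedges; apply/allP => -[a b] h /=.
by rewrite inE; apply/existsP; exists k.
Qed.

Lemma dist' k : cs k != [::] ->
  dist E's w' (sp' k) (ttk k) = (pweight w' (sp' k) (cs k))%:E.
Proof. by move=> h; apply: dist_min (cs_spath k) _ => vs hv; have [] := cmin h hv. Qed.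

Lemma short_eq k vs : cs k != [::] -> is_shortest E's w' (sp' k) (ttk k) vs -> vs = cs k.
Proof.
move=> h [h1 h2]; have [_ ] := cmin h h1; apply.
by move: h2; rewrite dist' // => -[->].
Qed.

Lemma P's_mem q : q \in P's -> exists k, cs k != [::] /\ q = (sp' k, ttk k).
Proof. by rewrite inE => /existsP [k /andP [h1 /eqP h2]]; exists k. Qed.

Lemma indep : independent E's w' P's.
Proof.
split.
  move=> q /P's_mem [k [hne ->]] /=; exists (cs k); split.
    by split; [exact: cs_spath | rewrite dist'].
  by move=> vs' hv; apply: short_eq.
move=> q q' /P's_mem [k [hne ->]] /P's_mem [k' [hne' ->]] /= hqq vs vs' h1 h2 e he1.
apply/negP => he2.
have e1 := short_eq hne h1; have e2 := short_eq hne' h2; subst vs vs'.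
apply: (disj' (k := k) (k' := k')) he1 he2.
by apply: contra hqq => /eqP ->.
Qed.

Lemma pres_lb F' : is_preserver E's w' P's F' -> E's \subset F'.
Proof.
move=> [sF hF]; apply/fintype.subsetP => e; rewrite inE => /existsP [k hk].
have hne : cs k != [::] by case: (cs k) hk.
have hq : (sp' k, ttk k) \in P's by rewrite inE; apply/existsP; exists k; rewrite hne eqxx.
have := hF _ hq; rewrite /= dist' // => hd.
case: (pselect (exists vs, is_spath F' (sp' k) (ttk k) vs)) => [[vs hvs] | hno]; last first.
  by move: hd; rewrite dist_none // => vs; apply/negP => hv; apply: hno; exists vs.
have [sg [s1 s2]] := dist_ex w' hvs.
move: hd; rewrite (dist_min s1 s2) => -[hd].
have [_ ] := cmin hne (spath_sub sF s1); rewrite hd lexx => /(_ isT) esg.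
case/and3P: s1 => p1 _ _.
by apply: (epath_edges p1); rewrite esg.
Qed.

Lemma nonneg' : nonneg_weights E's w'.
Proof.
move=> [a b]; rewrite inE => /existsP [k hk] /=.
have [B [b1 _ _]] := blockk hk.
rewrite (SP_w' b1); apply: (pweight_ge0 (E := E)); first by move=> e /pos /ltW.
by case: b1 => /and3P [].
Qed.

Lemma card_step (A : {set V * V}) l : uniq l ->
  #|A :|: [set e in l]| = (#|A| + count (fun e => e \notin A) l)%N.
Proof.
move=> u.
have -> : A :|: [set e in l] = A :|: [set e in seq.filter (fun e => e \notin A) l].
  by apply/setP => e; rewrite !inE mem_filter; case: (e \in A).
rewrite cardsU.
have -> : #|A :&: [set e in seq.filter (fun e => e \notin A) l]| = 0%N.
  by apply: eq_card0 => e; rewrite !inE mem_filter; case: (e \in A).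
rewrite subn0 cardsE -size_filter; congr (_ + _)%N.
by apply/card_uniqP; rewrite filter_uniq.
Qed.

Lemma card_E'j j : (j <= m)%N -> #|E'j j| = #|Fk j|.
Proof.
elim: j => [|j IH] hj.
  have z1 : #|E'j 0| = 0%N by apply: eq_card0 => e; rewrite !inE; apply/existsP => -[k].
  have z2 : #|Fk 0| = 0%N by apply: eq_card0 => e; rewrite !inE; apply/existsP => -[k].
  by rewrite z1.
have hj' : (j < m)%N by [].
set kj := Ordinal hj'.
have e1 : E'j j.+1 = E'j j :|: [set e in pedges (sp' kj) (cs kj)].
  apply/setP => e; rewrite !inE; apply/existsP/orP => [[k /andP [hk he]] | [ | he]].
  - rewrite ltnS leq_eqVlt in hk; case/orP: hk => hk.
      by right; move/eqP: hk => hk; rewrite -(ord_inj (hk : nat_of_ord k = nat_of_ord kj)).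
    by left; apply/existsP; exists k; rewrite hk.
  - by move/existsP => [k /andP [hk he]]; exists k; rewrite (ltn_trans hk) //.
  - by exists kj; rewrite he ltnSn.
have e2 : Fk j.+1 = Fk j :|: [set e in edges_of kj].
  apply/setP => e; rewrite !inE; apply/existsP/orP => [[k /andP [hk he]] | [ | he]].
  - rewrite ltnS leq_eqVlt in hk; case/orP: hk => hk.
      by right; move/eqP: hk => hk; rewrite -(ord_inj (hk : nat_of_ord k = nat_of_ord kj)).
    by left; apply/existsP; exists k; rewrite hk.
  - by move/existsP => [k /andP [hk he]]; exists k; rewrite (ltn_trans hk) //.
  - by exists kj; rewrite he ltnSn.
rewrite e1 e2 !card_step ?uniq_pedges ?pi_uniq //; last by case: (hD kj).
rewrite IH; last exact: ltnW.
congr (_ + _)%N.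
case: (hD kj) => <- _ _ _ _.
rewrite (eq_in_count (a2 := predT)); first by rewrite count_predT size_zip /=; apply/minn_idPr; exact: leqnSn.
move=> e he /=; rewrite inE; apply/negP => /existsP [k /andP [hk he']].
exact: (@disj k kj e hk he' he).
Qed.

Lemma card_E' : #|E's| = #|Fk m|.
Proof.
have -> : E's = E'j m.
  apply/setP => e; rewrite !inE.
  by apply/existsP/existsP => -[k hk]; exists k; move: hk; rewrite ?ltn_ord.
exact: card_E'j.
Qed.

Lemma card_P' : (#|P's| <= #|P|)%N.
Proof.
have : P's \subset [set (sp' k, ttk k) | k in [set: 'I_m]].
  apply/fintype.subsetP => q /P's_mem [k [_ ->]]; apply/imsetP; exists k => //.
move=> /subset_leq_card h; apply: leq_trans h _.
apply: leq_trans (leq_imset_card _ _) _.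
by rewrite cardsT card_ord /m /qs cardE.
Qed.

Lemma F_pres (w : V -> V -> R) :
  (forall s t vs vs', is_spath E s t vs -> is_spath E s t vs' ->
      pweight om s vs <= pweight om s vs' -> pweight w s vs <= pweight w s vs') ->
  is_preserver E w P (Fk m).
Proof.
move=> gle.
have sF : Fk m \subset E.
  apply/fintype.subsetP => e /Fk_edges [k [_ he]].
  exact: epath_edges (pi_epath (qk k)) he.
split => // q hq.
have qin : q \in qs by rewrite /qs mem_enum.
have hiq : (index q qs < m)%N by rewrite /m index_mem.
have eq : qk (index q qs) = q by rewrite /qk nth_index.
case: (hpi q) => [[h1 h2] | [hno _]].
  have hF : is_spath (Fk m) q.1 q.2 (pi q).
    case/and3P: h1 => p u l; apply/and3P; split => //.
    rewrite path_pedges; apply/allP => -[a b] hab /=.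
    apply: (edges_Fk (k := Ordinal hiq)) => //.
    by rewrite /edges_of /= eq.
  rewrite (dist_min h1 (fun vs hv => gle _ _ _ _ h1 hv (h2 _ hv))).
  by rewrite (dist_min hF (fun vs hv => gle _ _ _ _ h1 (spath_sub sF hv) (h2 _ (spath_sub sF hv)))).
rewrite !dist_none // => vs; apply/negP => hv.
by move: (hno vs); rewrite (spath_sub sF hv).
Qed.

End Construction.

Local Open Scope ring_scope.


Lemma ML (R : realType) (n : nat) (n0 : (0 < n)%N) (E : {set 'I_n * 'I_n})
  (w : 'I_n -> 'I_n -> R) (P : {set 'I_n * 'I_n}) : nonneg_weights E w ->
  exists F, is_preserver E w P F /\ exists (E' : {set 'I_n * 'I_n}) (w'' : 'I_n -> 'I_n -> R) (P' : {set 'I_n * 'I_n}),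
   [/\ nonneg_weights E' w'', (#|P'| <= #|P|)%N, independent E' w'' P',
       (forall F', is_preserver E' w'' P' F' -> E' \subset F') & #|E'| = #|F|].
Proof.
move=> hw; have [om [pos _ gle uni]] := perturb hw.
pose q0 := (Ordinal n0, Ordinal n0).
have hpi_ex : forall q : 'I_n * 'I_n, exists vs, SP E om q.1 q.2 vs \/
    ((forall vs, ~~ is_spath E q.1 q.2 vs) /\ vs = [::]).
  move=> q; case: (pselect (exists vs, is_spath E q.1 q.2 vs)) => [[vs hv] | hno].
    by have [vs0 h0] := SP_ex om hv; exists vs0; left.
  by exists [::]; right; split => // vs; apply/negP => h; apply: hno; exists vs.
have [pi hpi] := boolp.choice hpi_ex.
have [D hD] := boolp.choice (@datum_ex _ _ E om P pos q0 pi hpi).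
have FP := F_pres P q0 hpi gle.
exists (Fk P q0 pi (m P)); split; first exact: FP.
exists (E's D), (w' E om), (P's D); split.
- by move=> e he; exact: (nonneg' pos hD he).
- exact: card_P'.
- exact: (@indep _ _ E om P pos uni q0 pi hpi D hD).
- move=> F'; exact: (@pres_lb _ _ E om P pos uni q0 pi hpi D hD F').
- exact: (@card_E' _ _ E om P uni q0 pi hpi D hD).
Qed.

Local Close Scope ring_scope.

Theorem lemma4p3 (R : realType) (n p : nat) :
  (0 < n)%N -> (0 < p)%N ->
  exists (E : {set 'I_n * 'I_n}) (w : 'I_n -> 'I_n -> R) (P : {set 'I_n * 'I_n}),
    [/\ nonneg_weights E w, (#|P| <= p)%N, independent E w P,
        (exists F, is_preserver E w P F /\ #|F| = DP R n p)
      & forall F, is_preserver E w P F -> (DP R n p <= #|F|)%N].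
Proof.
move=> n0 p0.
rewrite /DP; case: ex_minnP => d /asboolP hd dmin.
case: d hd dmin => [|d'] hd dmin.
  pose Z := [set x : 'I_n * 'I_n | false].
  exists Z, (fun _ _ => 0%R), Z; split.
  - by move=> e; rewrite inE.
  - by rewrite (@eq_card0 _ Z) // => e; rewrite inE.
  - by split => q; rewrite inE.
  - exists Z; split; last by apply: eq_card0 => e; rewrite inE.
    by split => // q; rewrite inE.
  - by [].
have [E0 [w0 [P0 [hw0 hp0 hF0]]]] : exists (E0 : {set 'I_n * 'I_n}) (w0 : 'I_n -> 'I_n -> R) (P0 : {set 'I_n * 'I_n}),
    [/\ nonneg_weights E0 w0, #|P0| = p &
    forall F, is_preserver E0 w0 P0 F -> (d' < #|F|)%N].
  apply: contrapT => hno.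
  have : (d'.+1 <= d')%N; last by rewrite ltnn.
  apply: dmin; apply/asboolP => E0 w0 P0 hw hp; apply: contrapT => hF.
  apply: hno; exists E0, w0, P0; split => // F hpF.
  rewrite ltnNge; apply/negP => hle; apply: hF; exists F; split => //.
have [H [[sH dH] cH]] := hd E0 w0 P0 hw0 hp0.
have hwH : nonneg_weights H w0 by move=> e he; apply: hw0; exact: (fintype.subsetP sH).
have [F [[sF dF] [E' [w' [P' [h1 h2 h3 h4 h5]]]]]] := @ML R n n0 H w0 P0 hwH.
have pF : is_preserver E0 w0 P0 F.
  split; first exact: fintype.subset_trans sF sH.
  by move=> q hq; rewrite dF // dH.
have cF : #|F| = d'.+1.
  apply/eqP; rewrite eqn_leq hF0 // andbT.
  apply: leq_trans cH; exact: subset_leq_card.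
exists E', w', P'; split => //.
- by rewrite -hp0.
- exists E'; split; last by rewrite h5.
  by split => //; exact: fintype.subxx.
- by move=> F' hF'; rewrite -cF -h5; apply: subset_leq_card; apply: h4.
Qed.
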